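(* Let $n,d$ be positive integers. If $G$ is a graph with $n$ vertices and $\frac{nd}{2}-1$ edges, then the number of closed walks of length four in $G$ is at least $n(2d^2-d)-8d+2$.
   Context: All graphs are finite, simple and undirected. A closed walk of length four is a sequence of vertices $v_0v_1v_2v_3v_4$ with $v_4=v_0$ and $v_{i}v_{i+1}$ an edge for each $0\le i\le 3$. *)

(* Defs.v *)
From mathcomp Require Import all_boot all_order all_algebra.
Set Implicit Arguments. Unset Strict Implicit. Unset Printing Implicit Defensive.

Definition simple_graph (T : finType) (e : rel T) : Prop :=
  symmetric e /\ irreflexive e.

Definition edge_set (T : finType) (e : rel T) : {set {set T}} :=
  [set E : {set T} | [exists x, exists y, e x y && (E == [set x; y])]].

Definition num_edges (T : finType) (e : rel T) : nat := #|edge_set e|.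

(* Closed walks of length four v0 v1 v2 v3 v4 = v0, counted as
   sequences (v0, v1, v2, v3). *)
Definition num_closed_walks4 (T : finType) (e : rel T) : nat :=
  #|[set w : T * T * T * T |
      [&& e w.1.1.1 w.1.1.2, e w.1.1.2 w.1.2, e w.1.2 w.2 & e w.2 w.1.1.1]]|.

(* Main.v *)
Require Import Defs.
From mathcomp Require Import all_boot all_order all_algebra.
From mathcomp Require Import zify.
Import GRing.Theory Num.Theory.
Set Implicit Arguments. Unset Strict Implicit.
Lemma cardP (U : finType) (P : pred U) : #|[set x | P x]| = \sum_x (P x : nat).
Proof.
rewrite -sum1_card big_mkcond /=; apply: eq_bigr => x _; rewrite inE; by case: (P x).
Qed.

Lemma sum4 (T : finType) (F : T -> T -> T -> T -> nat) :
  \sum_(w : T * T * T * T) F w.1.1.1 w.1.1.2 w.1.2 w.2 =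
  \sum_a \sum_b \sum_c \sum_f F a b c f.
Proof.
rewrite -(pair_bigA _ (fun p f => F p.1.1 p.1.2 p.2 f)) /=.
rewrite -(pair_bigA _ (fun p c => \sum_f F p.1 p.2 c f)) /=.
by rewrite -(pair_bigA _ (fun a b => \sum_c \sum_f F a b c f)).
Qed.

Lemma collapse (T : finType) (a : T) (X : T -> nat) :
  \sum_c ((c == a) * X c) = X a.
Proof.
rewrite (bigD1 a) //= eqxx mul1n big1 ?addn0 // => c /negbTE ->; by rewrite mul0n.
Qed.

Lemma edges_le (T : finType) (e : rel T) (r : rel T) : simple_graph e ->
  (forall x y, x != y -> r x y || r y x) ->
  num_edges e <= #|[set p : T * T | e p.1 p.2 && r p.1 p.2]|.
Proof.
move=> [sy ir] tot.
apply: (leq_trans _ (leq_imset_card (fun p : T * T => [set p.1; p.2]) _)).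
apply: subset_leq_card; apply/subsetP => E; rewrite inE => /existsP [x /existsP [y /andP [exy /eqP ->]]].
have nxy : x != y by apply/eqP => h; move: exy; rewrite h ir.
case/orP: (tot x y nxy) => h.
  by apply/imsetP; exists (x, y); rewrite // inE /= exy h.
apply/imsetP; exists (y, x); first by rewrite inE /= h sy exy.
by rewrite /= setUC.
Qed.
Unset Implicit Arguments. Set Strict Implicit.
Lemma step2 (T : finType) (e : rel T) : simple_graph e ->
  2 * num_edges e <= \sum_x \sum_y (e x y : nat).
Proof.
move=> sg.
set r : rel T := fun x y => (enum_rank x < enum_rank y)%N.
have h1 := @edges_le T e r sg.
have h2 := @edges_le T e (fun x y => ~~ r x y) sg.
have tot : forall x y, x != y -> r x y || r y x.
  move=> x y nxy; rewrite /r; case: ltngtP => // /val_inj /enum_rank_inj h.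
  by rewrite h eqxx in nxy.
have tot2 : forall x y, x != y -> ~~ r x y || ~~ r y x.
  move=> x y nxy; rewrite /r -negb_and; apply/negP => /andP [h h'].
  by move: (ltn_trans h h'); rewrite ltnn.
move: (h1 tot) (h2 tot2); rewrite !cardP => a b.
have -> : \sum_x \sum_y (e x y : nat) = \sum_(p : T * T) (e p.1 p.2 : nat).
  by rewrite (pair_bigA _ (fun x y => (e x y : nat))).
have -> : \sum_(p : T * T) (e p.1 p.2 : nat) =
   \sum_(p : T * T) (e p.1 p.2 && r p.1 p.2 : nat) + \sum_(p : T * T) (e p.1 p.2 && ~~ r p.1 p.2 : nat).
  rewrite -big_split /=; apply: eq_bigr => p _; by case: (e _ _); case: (r _ _).
by rewrite mul2n -addnn; apply: leq_add.
Qed.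

Definition degree (T : finType) (e : rel T) (x : T) : nat := \sum_y (e x y : nat).

Lemma step1 (T : finType) (e : rel T) (deg := @degree T e) : simple_graph e ->
  \sum_x deg x * deg x + \sum_x deg x * deg x <= num_closed_walks4 e + \sum_x deg x.
Proof.
move=> [sy ir].
have pw : forall a b c f,
  ((c == a) * (e a b * e a f)) + ((f == b) * (e a b * e b c)) <=
  ([&& e a b, e b c, e c f & e f a] : nat) + (c == a) * ((f == b) * e a b).
  move=> a b c f; case: eqP => [->|_]; case: eqP => [->|_];
  rewrite ?mul1n ?mul0n ?addn0 ?add0n ?(sy b a) ?(sy f a) ?(sy c b);
  by case: (e _ _); case: (e _ _); case: (e _ _).
have W : num_closed_walks4 e = \sum_a \sum_b \sum_c \sum_f ([&& e a b, e b c, e c f & e f a] : nat).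
  rewrite /num_closed_walks4 cardP; exact: (sum4 (fun a b c f => ([&& e a b, e b c, e c f & e f a] : nat))).
have A : \sum_x deg x * deg x = \sum_a \sum_b \sum_c \sum_f ((c == a) * (e a b * e a f)).
  apply: eq_bigr => a _; rewrite /deg /degree big_distrl /=; apply: eq_bigr => b _.
  rewrite big_distrr /=.
  transitivity (\sum_(f:T) \sum_(c:T) ((c == a) * (e a b * e a f))); last by rewrite exchange_big.
  by apply: eq_bigr => f _; rewrite collapse.
have B : \sum_x deg x * deg x = \sum_a \sum_b \sum_c \sum_f ((f == b) * (e a b * e b c)).
  have -> : \sum_a \sum_b \sum_c \sum_f ((f == b) * (e a b * e b c)) = \sum_a \sum_b \sum_c (e a b * e b c : nat).
    apply: eq_bigr => a _; apply: eq_bigr => b _; apply: eq_bigr => c _; exact: collapse.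
  rewrite exchange_big /=; apply: eq_bigr => b _; rewrite /deg /degree big_distrl /=.
  apply: eq_bigr => a _; rewrite big_distrr /= sy.
  done.
have C : \sum_x deg x = \sum_a \sum_b \sum_c \sum_f ((c == a) * ((f == b) * e a b)).
  apply: eq_bigr => a _; apply: eq_bigr => b _.
  under eq_bigr => c _ do rewrite -big_distrr /=.
  rewrite (collapse a (fun _ => \sum_f ((f == b) * e a b))).
  by rewrite (collapse b (fun _ => (e a b : nat))).
rewrite {1}A B W C -!big_split /=; apply: leq_sum => a _; rewrite -!big_split /=; apply: leq_sum => b _.
rewrite -!big_split /=; apply: leq_sum => c _; rewrite -!big_split /=; apply: leq_sum => f _; exact: pw.
Qed.
Local Open Scope ring_scope.
Lemma step3 (T : finType) (e : rel T) (d : nat) :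
  (2 * d * \sum_x degree T e x <= \sum_x degree T e x * degree T e x + #|T| * (d * d))%N.
Proof.
rewrite big_distrr /= -sum_nat_const -big_split /=; apply: leq_sum => x _; move: (degree T e x) => k; case: (leqP d k) => h; [have [t ->] : exists t, k = (d + t)%N by exists (k - d)%N; lia | have [t ->] : exists t, d = (k + t)%N by exists (d - k)%N; lia]; nia.
Qed.

Theorem corollary3p2 (n d : nat) (T : finType) (e : rel T) :
  (0 < n)%N -> (0 < d)%N -> simple_graph e -> #|T| = n ->
  (2 * num_edges e + 2 = n * d)%N ->
  (n%:Z * (2 * d%:Z ^+ 2 - d%:Z) - 8 * d%:Z + 2 <= (num_closed_walks4 e)%:Z).
Proof.
move=> n0 d0 sg hT hm.
have h1 := @step1 T e sg.
have h2 := @step2 T e sg.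
have h3 := @step3 T e d.
rewrite hT in h3.
move: h1 h2 h3.
rewrite -/(\sum_x degree T e x).
set W := num_closed_walks4 e.
set S := \sum_x _ * _.
set D := \sum_x degree T e x.
rewrite /D => h1 h2 h3.
have h4 : (n * d <= D + 2)%N by rewrite /D; lia.
have h5 : ((4 * d - 1) * (n * d) <= (4 * d - 1) * (D + 2))%N by apply: leq_mul.
have h6 : (2 * n * d * d + 2 <= W + n * d + 8 * d)%N by nia.
rewrite expr2; lia.
Qed.
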